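(* Suppose $P_\mu$ is the Bernoulli distribution with mean $\mu$, and fix $\theta>2/3$. Then $q_\theta(\mu)\ge\exp(-0.5)/3$ for all $\mu\ge(1+\theta)/2$.
   Context: For $\mu>\theta$, with $X_1,X_2,\dots$ i.i.d. $\sim P_\mu$ and $M_n=\frac1n\sum_{i=1}^nX_i$, $q_\theta(\mu):=\mathbb{P}[M_n>\theta\text{ for all }n\ge1]$. *)

(* Defs.v *)
From HB Require Import structures.
From mathcomp Require Import all_boot all_order all_algebra.
From mathcomp Require Import all_classical all_reals all_analysis.
Set Implicit Arguments. Unset Strict Implicit. Unset Printing Implicit Defensive.
Import Order.TTheory GRing.Theory Num.Theory.
Import numFieldNormedType.Exports.
Local Open Scope classical_set_scope.
Local Open Scope ring_scope.

Definition mutually_independent d (T : measurableType d) (R : realType)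
    (P : probability T R) (X : nat -> {RV P >-> R}) : Prop :=
  forall (s : seq nat) (B : nat -> set R),
    uniq s -> (forall i, measurable (B i)) ->
    P (\big[setI/setT]_(i <- s) (X i @^-1` B i)) =
    (\prod_(i <- s) P (X i @^-1` B i))%E.

Definition bernoulli_rv d (T : measurableType d) (R : realType)
    (P : probability T R) (Y : {RV P >-> R}) (mu : R) : Prop :=
  P (Y @^-1` [set 1]) = mu%:E /\ P (Y @^-1` [set 0]) = (1 - mu)%:E.

(* M_n = (1/n) sum_{i=1}^n X_i, with X_1, X_2, ... indexed as X 0, X 1, ... *)
Definition running_mean d (T : measurableType d) (R : realType)
    (P : probability T R) (X : nat -> {RV P >-> R}) (n : nat) (w : T) : R :=
  (n%:R)^-1 * \sum_(i < n) X i w.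

Definition q_event d (T : measurableType d) (R : realType)
    (P : probability T R) (X : nat -> {RV P >-> R}) (theta : R) : set T :=
  [set w | forall n : nat, (0 < n)%N -> theta < running_mean X n w].

(* Main.v *)
Require Import Defs.
From HB Require Import structures.
From mathcomp Require Import all_boot all_order all_algebra.
From mathcomp Require Import all_classical all_reals all_analysis.
From mathcomp Require Import ring lra.
Import Order.TTheory GRing.Theory Num.Theory.
Local Open Scope classical_set_scope.
Local Open Scope ring_scope.
Set Implicit Arguments. Unset Strict Implicit.

Definition bval (R : realType) (b : bool) : R := if b then 1 else 0.
Definition bw (R : realType) (mu : R) (b : bool) : R := if b then mu else 1 - mu.
Fixpoint allseqs (n : nat) : seq (seq bool) :=
  match n with
  | 0%N => [:: [::]]
  | n'.+1 => map (cons true) (allseqs n') ++ map (cons false) (allseqs n')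
  end.
Definition W (R : realType) (mu : R) (s : seq bool) : R := \prod_(b <- s) bw mu b.
Fixpoint ok (R : realType) (th y : R) (s : seq bool) : bool :=
  match s with
  | [::] => true
  | b :: t => (0 < y + bval R b - th) && ok th (y + bval R b - th) t
  end.

Lemma sumW (R : realType) (mu : R) n : \sum_(s <- allseqs n) W mu s = 1.
Proof.
elim: n => [|n IH] /=; first by rewrite big_seq1 /W big_nil.
rewrite big_cat !big_map /=.
under eq_bigr do rewrite /W big_cons -/(W mu _).
under [X in _ + X]eq_bigr do rewrite /W big_cons -/(W mu _).
by rewrite -!mulr_sumr IH /= !mulr1 addrC subrK.
Qed.

Lemma expR1_le3 (R : realType) : expR (1 : R) <= 3.
Proof.
have h : expR (1/8 : R) <= 8/7.
  have := expR_ge1Dx (- (1/8) : R); rewrite expRN => h.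
  have hp := expR_gt0 (1/8 : R).
  have h2 : (1 + - (1/8)) * expR (1/8 : R) <= 1.
    by rewrite -[X in _ <= X](mulVf (lt0r_neq0 hp)) ler_wpM2r // ltW.
  nra.
have -> : (1 : R) = 8%:R * (1/8) by rewrite mul1r mulfV.
rewrite expRM_natl.
have a0 := expR_ge0 (1/8 : R).
set a := expR (1/8 : R) in h a0 *.
have a2 : a ^+ 2 <= 131/100 by rewrite expr2; nra.
have a4 : a ^+ 4 <= 172/100.
  have -> : a ^+ 4 = a ^+ 2 * a ^+ 2 by rewrite -exprD.
  have := exprn_ge0 2 a0; nra.
have -> : a ^+ 8 = a ^+ 4 * a ^+ 4 by rewrite -exprD.
have := exprn_ge0 4 a0; nra.
Qed.

Lemma bad_bound (R : realType) (th mu : R) n y :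
  0 <= mu -> mu <= 1 -> th < 1 -> 1 - mu <= (1 - th) / 2 ->
  \sum_(s <- allseqs n | ~~ ok th y s) W mu s <= expR (- y).
Proof.
move=> mu0 mu1 th1 hp.
elim: n y => [|n IH] y /=.
  by rewrite big_cons big_nil /= expR_ge0.
have step b : \sum_(s <- allseqs n | ~~ ok th y (b :: s)) W mu (b :: s)
    <= bw mu b * expR (- (y + bval R b - th)).
  have bw0 : 0 <= bw mu b by case: b => /=; lra.
  under eq_bigr do rewrite /W big_cons -/(W mu _).
  rewrite -mulr_sumr /=; apply: ler_wpM2l => //.
  case: (ltrP 0 (y + bval R b - th)) => hy /=.
    exact: IH.
  rewrite (eq_bigl xpredT) ?sumW //.
  by rewrite -[X in X <= _]expR0 ler_expR lerNr oppr0.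
rewrite big_cat !big_map.
apply: le_trans (lerD (step true) (step false)) _ => /=.
rewrite !opprD !expRD opprK.
have e3 := expR1_le3 R.
have eth : 1 + (1 - th) <= expR (1 - th) := expR_ge1Dx _.
have -> : expR (- 1 : R) = (expR 1)^-1 by rewrite expRN.
have -> : expR (- 0 : R) = 1 by rewrite oppr0 expR0.
have hE : 0 < expR (1 : R) := expR_gt0 1.
have hy : 0 < expR (- y) := expR_gt0 _.
have hth : 0 < expR th := expR_gt0 _.
have -> : expR th = expR 1 * (expR (1 - th))^-1.
  by rewrite -expRN -expRD opprB addrCA subrr addr0.
set E := expR (1 : R) in e3 hE *.
set F := expR (1 - th) in eth *.
have hF : 0 < F by rewrite /F expR_gt0.
have key : mu + (1 - mu) * E <= F by nra.
rewrite -subr_ge0.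
have -> : expR (- y) - (mu * (expR (- y) * E^-1 * (E * F^-1)) + (1 - mu) * (expR (- y) * 1 * (E * F^-1)))
   = expR (- y) * F^-1 * (F - (mu + (1 - mu) * E)).
  by field; rewrite ?gt_eqF.
apply: mulr_ge0; last by rewrite subr_ge0.
by apply: mulr_ge0; rewrite ?invr_ge0 ltW.
Qed.

Lemma good_bound (R : realType) (th mu : R) n y :
  0 <= mu -> mu <= 1 -> th < 1 -> 1 - mu <= (1 - th) / 2 ->
  1 - expR (- y) <= \sum_(s <- allseqs n | ok th y s) W mu s.
Proof.
move=> h1 h2 h3 h4; have := sumW mu n; rewrite (bigID (ok th y)) /= => h.
have := @bad_bound R th mu n y h1 h2 h3 h4; lra.
Qed.

Lemma ok_ones (R : realType) (th : R) K y t : th < 1 -> 0 <= y ->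
  ok th y (nseq K true ++ t) = ok th (y + K%:R * (1 - th)) t.
Proof.
move=> th1; elim: K y => [|K IH] y y0 /=; first by rewrite mul0r addr0.
have hp : 0 < y + 1 - th by lra.
rewrite hp /= IH; last by lra.
congr ok; rewrite mulrSr; ring.
Qed.

Lemma size_allseqs n s : s \in allseqs n -> size s = n.
Proof.
elim: n s => [|n IH] s /=; first by rewrite inE => /eqP ->.
by rewrite mem_cat => /orP [] /mapP [t /IH <- ->].
Qed.

Lemma uniq_allseqs n : uniq (allseqs n).
Proof.
elim: n => [|n IH] //=.
have ic b : injective (@cons bool b) by move=> ? ? [].
rewrite cat_uniq !map_inj_uniq //.
rewrite IH andbT /=; apply/hasPn => s /mapP [t _ ->].
by apply/mapP => -[u _ []].
Qed.

Lemma W_ones (R : realType) (mu : R) K t : W mu (nseq K true ++ t) = mu ^+ K * W mu t.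
Proof.
elim: K => [|K IH] /=; first by rewrite mul1r.
by rewrite /W big_cons -/(W mu _) IH exprS mulrA.
Qed.

Lemma ok_prefix (R : realType) (th : R) s y : ok th y s ->
  forall n, (0 < n)%N -> (n <= size s)%N ->
  0 < y + \sum_(i < n) bval R (nth false s i) - n%:R * th.
Proof.
elim: s y => [|b t IH] y //=; first by move=> _ [|n].
move=> /andP [hp hok] [|n] // _; rewrite ltnS => hn.
rewrite big_ord_recl /=.
case: n hn => [|n] hn; first by rewrite big_ord0 addr0 mul1r.
have := IH _ hok n.+1 erefl hn.
under eq_bigr do rewrite /bump /=.
suff -> : y + (bval R b + \sum_(i < n.+1) bval R (nth false t i)) - n.+2%:R * th =
  y + bval R b - th + \sum_(i < n.+1) bval R (nth false t i) - n.+1%:R * th by [].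
rewrite (natrD _ 1 n.+1); ring.
Qed.

Definition cyl (R : realType) d (T : measurableType d) (P : probability T R)
  (X : nat -> {RV P >-> R}) (s : seq bool) : set T :=
  [set w | forall i, (i < size s)%N -> X i w = bval R (nth false s i)].

Lemma bigsetI_mem (T : Type) (r : seq nat) (F : nat -> set T) :
  \big[setI/setT]_(i <- r) F i = [set w | forall i, i \in r -> F i w].
Proof.
elim: r => [|a r IH]; first by rewrite big_nil; apply/seteqP; split.
rewrite big_cons IH; apply/seteqP; split => w /=.
  by move=> [Fa H] i; rewrite inE => /orP [/eqP -> //|/H].
by move=> H; split; [apply: H; rewrite mem_head | move=> i ir; apply: H; rewrite inE ir orbT].
Qed.

Lemma cyl_big (R : realType) d (T : measurableType d) (P : probability T R)
  (X : nat -> {RV P >-> R}) s :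
  cyl X s = \big[setI/setT]_(i <- iota 0 (size s)) (X i @^-1` [set bval R (nth false s i)]).
Proof.
rewrite bigsetI_mem; apply/seteqP; split => w /= H i.
  by rewrite mem_iota add0n => /H.
by move=> hi; apply: H; rewrite mem_iota add0n.
Qed.

Lemma pre_meas (R : realType) d (T : measurableType d) (P : probability T R)
  (Y : {RV P >-> R}) (c : R) : measurable (Y @^-1` [set c]).
Proof.
by rewrite -[X in measurable X]setTI; apply: measurable_funPT => //; exact: measurable_set1.
Qed.

Lemma cyl_meas (R : realType) d (T : measurableType d) (P : probability T R)
  (X : nat -> {RV P >-> R}) s : measurable (cyl X s).
Proof.
rewrite cyl_big; apply: big_ind => //; first exact: measurableI.
Qed.

Lemma cyl_measure (R : realType) d (T : measurableType d) (P : probability T R)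
  (X : nat -> {RV P >-> R}) (mu : R) s :
  (forall i, bernoulli_rv (X i) mu) -> mutually_independent X ->
  P (cyl X s) = (W mu s)%:E.
Proof.
move=> hb hind; rewrite cyl_big hind; [|exact: iota_uniq|by move=> i; exact: measurable_set1].
rewrite (eq_bigr (fun i => (bw mu (nth false s i))%:E)); last first.
  move=> i _; have [h1 h0] := hb i.
  by case: (nth false s i) => /=.
by rewrite prodEFin /W (big_nth false) /index_iota subn0.
Qed.

Lemma cyl_disj (R : realType) d (T : measurableType d) (P : probability T R)
  (X : nat -> {RV P >-> R}) s t :
  size s = size t -> s != t -> cyl X s `&` cyl X t = set0.
Proof.
move=> hsz /negP hne; apply/seteqP; split => // w [hs ht] /=.
apply: hne; apply/eqP; apply: (eq_from_nth (x0 := false) hsz) => i hi.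
have hi' : (i < size t)%N by rewrite -hsz.
have := hs i hi; have := ht i hi' => ->.
case: (nth false s i); case: (nth false t i) => //= /eqP;
  by rewrite ?oner_eq0 // eq_sym oner_eq0.
Qed.

Lemma cyl_disj_big (R : realType) d (T : measurableType d) (P : probability T R)
  (X : nat -> {RV P >-> R}) a G :
  a \notin G -> (forall s, s \in G -> size s = size a) ->
  cyl X a `&` \big[setU/set0]_(s <- G) cyl X s = set0.
Proof.
elim: G => [|b G' IHG]; first by rewrite big_nil setI0.
rewrite inE negb_or => /andP [ab aG'] hs.
rewrite big_cons setIUr IHG //; last by move=> s sG; apply: hs; rewrite inE sG orbT.
rewrite cyl_disj ?setU0 // (hs b) ?mem_head //.
Qed.

Lemma union_measure (R : realType) d (T : measurableType d) (P : probability T R)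
  (X : nat -> {RV P >-> R}) N G :
  uniq G -> (forall s, s \in G -> size s = N) ->
  P (\big[setU/set0]_(s <- G) cyl X s) = (\sum_(s <- G) P (cyl X s))%E.
Proof.
elim: G => [|a G IH]; first by rewrite !big_nil measure0.
move=> /= /andP [aG uG] hsz.
have mU : forall G', measurable (\big[setU/set0]_(s <- G') cyl X s).
  by move=> G'; apply: big_ind => //; [exact: measurableU | move=> *; exact: cyl_meas].
rewrite !big_cons measureU; [ | exact: cyl_meas | exact: mU | ].
  congr (_ + _)%E; apply: IH => //.
  by move=> s sG; apply: hsz; rewrite inE sG orbT.
apply: cyl_disj_big => // s sG.
by rewrite (hsz s) ?(hsz a) ?mem_head // inE sG orbT.
Qed.

Definition SN (R : realType) d (T : measurableType d) (P : probability T R)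
  (X : nat -> {RV P >-> R}) (th : R) (N : nat) : set T :=
  [set w | forall n, (0 < n)%N -> (n <= N)%N -> th < running_mean X n w].

Lemma lt_meas (R : realType) d (T : measurableType d) (P : probability T R)
  (X : nat -> {RV P >-> R}) (th : R) n :
  measurable [set w | th < running_mean X n w].
Proof.
have mf : measurable_fun setT (running_mean X n).
  apply: (@measurable_realfun.measurable_funM _ _ _ _ (fun _ => n%:R^-1) (fun w => \sum_(i < n) X i w)).
    exact: measurable_cst.
  by apply: measurable_sum => i; exact: measurable_funPT.
have := mf measurableT _ (measurable_itv `]th, +oo[); rewrite setTI.
congr measurable; apply/seteqP; split => w /=; by rewrite in_itv /= andbT.
Qed.

Lemma SN_meas (R : realType) d (T : measurableType d) (P : probability T R)
  (X : nat -> {RV P >-> R}) (th : R) N : measurable (SN X th N).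
Proof.
have -> : SN X th N = \bigcap_n (if ((0 < n) && (n <= N))%N then
   [set w | th < running_mean X n w] else setT).
  apply/seteqP; split => w /=.
    by move=> H n _; case: ifP => // /andP [h1 h2]; apply: H.
  by move=> H n h1 h2; have := H n I; rewrite h1 h2.
apply: bigcapT_measurable => n; case: ifP => _ //; exact: lt_meas.
Qed.

Lemma cyl_sub (R : realType) d (T : measurableType d) (P : probability T R)
  (X : nat -> {RV P >-> R}) (th : R) s :
  ok th 0 s -> cyl X s `<=` SN X th (size s).
Proof.
move=> hok w hw n n0 nN.
have h := ok_prefix hok n0 nN.
rewrite /running_mean (eq_bigr (fun i : 'I_n => bval R (nth false s i))); last first.
  move=> i _; rewrite /cyl /= in hw; apply: hw; exact: leq_trans (ltn_ord i) nN.
have npos : (0 : R) < n%:R by rewrite ltr0n.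
rewrite -(ltr_pM2l npos) mulrA mulfV ?gt_eqF // mul1r; lra.
Qed.

Lemma claimA (R : realType) d (T : measurableType d) (P : probability T R)
  (X : nat -> {RV P >-> R}) (th mu : R) K N :
  th < 1 -> 0 <= mu -> mu <= 1 -> 1 - mu <= (1 - th) / 2 ->
  (forall i, bernoulli_rv (X i) mu) -> mutually_independent X ->
  ((mu ^+ K * (1 - expR (- (K%:R * (1 - th)))))%:E <= P (SN X th (K + N)))%E.
Proof.
move=> th1 mu0 mu1 hp hb hind.
set G := map (cat (nseq K true)) [seq t <- allseqs N | ok th (K%:R * (1 - th)) t].
have memG s : s \in G -> size s = (K + N)%N /\ ok th 0 s.
  case/mapP => t; rewrite mem_filter => /andP [hok ht] ->.
  rewrite size_cat size_nseq (size_allseqs ht); split => //.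
  by rewrite ok_ones // (@add0r R).
have sub : \big[setU/set0]_(s <- G) cyl X s `<=` SN X th (K + N).
  rewrite big_seq; apply: (big_ind (fun A : set T => A `<=` SN X th (K + N))) => //.
    by move=> A B hA hB x [/hA|/hB].
  move=> s /memG [hs hok]; rewrite -hs; exact: cyl_sub.
have mU : measurable (\big[setU/set0]_(s <- G) cyl X s).
  by apply: big_ind => //; [exact: measurableU | move=> *; exact: cyl_meas].
have uG : uniq G.
  rewrite map_inj_uniq ?filter_uniq ?uniq_allseqs //.
  by move=> a b /(congr1 (drop K)); rewrite !drop_size_cat ?size_nseq.
have hU := @union_measure _ _ _ _ X (K + N)%N G uG (fun s h => proj1 (memG s h)).
suff hge : ((mu ^+ K * (1 - expR (- (K%:R * (1 - th)))))%:E <=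
   P (\big[setU/set0]_(s <- G) cyl X s))%E.
  by apply: (le_trans hge); apply: le_measure; rewrite ?inE //; exact: SN_meas.
rewrite hU.
rewrite (eq_bigr (fun s => (W mu s)%:E)); last by move=> s _; exact: cyl_measure.
rewrite sumEFin lee_fin big_map big_filter.
under eq_bigr do rewrite W_ones.
rewrite -mulr_sumr; apply: ler_wpM2l; first exact: exprn_ge0.
exact: good_bound.
Qed.

Lemma real_final (R : realType) (th mu : R) :
  2 / 3 < th -> th < mu -> mu <= 1 -> (1 + th) / 2 <= mu ->
  exists K : nat, expR (- (1 / 2)) / 3 <= mu ^+ K * (1 - expR (- (K%:R * (1 - th)))).
Proof.
move=> h23 hthmu hmu1 hmid.
set eps := 1 - th.
have e0 : 0 < eps by rewrite /eps; lra.
have e3 : eps < 1 / 3 by rewrite /eps; lra.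
set x := 1 / (2 * eps).
have x0 : 0 <= x by rewrite /x divr_ge0 // ?mulr_ge0 // ltW.
exists (Num.truncn x).+1.
have hK1 := truncnS_gt x.
have hK2 : (Num.truncn x)%:R <= x by rewrite truncn_le.
set k : R := (Num.truncn x).+1%:R in hK1 *.
have hk : k = (Num.truncn x)%:R + 1 by rewrite /k -natr1.
have hxe : x * eps = 1 / 2 by rewrite /x; field; rewrite gt_eqF.
have ke1 : 1 / 2 < k * eps by rewrite -hxe ltr_pM2r.
have ke2 : k * eps <= 1 / 2 + eps.
  by rewrite -hxe hk mulrDl mul1r lerD2r ler_pM2r.
have mu0 : 0 < mu by lra.
have hmuK : expR (- (1 / 2)) <= mu ^+ (Num.truncn x).+1.
  set p := 1 - mu.
  have hmuE : expR (- (p / mu)) <= mu.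
    have hE := expR_gt0 (p / mu).
    rewrite expRN -(ler_pM2r hE) mulVf ?gt_eqF //.
    have := expR_ge1Dx (p / mu).
    have -> : 1 + p / mu = mu^-1 by rewrite /p; field; rewrite gt_eqF.
    move=> h; have := ler_pM2l mu0 (mu^-1) (expR (p / mu)).
    by rewrite h mulfV ?gt_eqF.
  apply: (le_trans (y := expR (- (p / mu)) ^+ (Num.truncn x).+1)); last first.
    by apply: lerXn2r; rewrite ?nnegrE ?expR_ge0 // ltW.
  rewrite -expRM_natl ler_expR -/k.
  have k0 : 0 <= k by rewrite /k ler0n.
  have hpe : p <= eps / 2 by rewrite /p /eps; lra.
  have h : k * p <= k * (eps / 2) by apply: ler_wpM2l.
  have : k * p <= mu / 2.
    rewrite mulrA in h.
    move: ke2 e3 h; rewrite /p /eps => ke2 e3 h; lra.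
  clear h.
  move=> h; rewrite mulrN lerN2 mulrA ler_pdivrMr //; lra.
have hb : 1 / 3 <= 1 - expR (- (k * eps)).
  have : expR (- (k * eps)) <= expR (- (1 / 2)) by rewrite ler_expR lerN2 ltW.
  have : 3 / 2 <= expR (1 / 2 : R) by have := expR_ge1Dx (1 / 2 : R); lra.
  move=> h1 h2.
  have h3 : expR (- (1 / 2 : R)) <= 2 / 3.
    by rewrite expRN -[2 / 3](invf_div) lef_pV2 ?posrE ?expR_gt0.
  lra.
rewrite -/k.
have := expR_gt0 (- (1 / 2) : R) => hp.
rewrite -/eps. nra.
Qed.

Theorem lemma2 (R : realType) (d : measure_display) (T : measurableType d)
    (P : probability T R) (X : nat -> {RV P >-> R}) (theta mu : R) :
  2 / 3 < theta -> theta < mu -> mu <= 1 -> (1 + theta) / 2 <= mu ->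
  (forall i, bernoulli_rv (X i) mu) -> mutually_independent X ->
  ((expR (- (1 / 2)) / 3)%:E <= P (q_event X theta))%E.
Proof.
move=> h23 hthmu hmu1 hmid hb hind.
have [K hK] := real_final h23 hthmu hmu1 hmid.
have th1 : theta < 1 by lra.
have mu0 : 0 <= mu by lra.
have hp : 1 - mu <= (1 - theta) / 2 by lra.
have hA N : ((expR (- (1 / 2)) / 3)%:E <= P (SN X theta N))%E.
  have hc := @claimA _ _ _ _ X theta mu K N th1 mu0 hmu1 hp hb hind.
  have hc2 : (P (SN X theta (K + N)) <= P (SN X theta N))%E.
    apply: le_measure; rewrite ?inE; try exact: SN_meas.
    by move=> w H n n0 nN; apply: H => //; exact: leq_trans nN (leq_addl _ _).
  apply: le_trans (le_trans hc hc2); by rewrite lee_fin.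
have qE : q_event X theta = \bigcap_N SN X theta N.
  apply/seteqP; split => w /=.
    by move=> H N _ n n0 _; exact: H.
  by move=> H n n0; exact: (H n I n n0 (leqnn n)).
have cv : (P \o SN X theta) x @[x --> \oo] --> P (\bigcap_n SN X theta n).
  apply: nonincreasing_cvg_mu.
  - by apply: le_lt_trans (probability_le1 P (SN_meas X theta 0)) _; rewrite ltry.
  - exact: SN_meas.
  - by apply: bigcapT_measurable => n; exact: SN_meas.
  - move=> n m nm; apply/subsetPset => w H k k0 km; apply: H => //.
    exact: leq_trans km nm.
rewrite qE -(cvg_lim _ cv) //.
apply: lime_ge; first by apply/cvg_ex; eexists; exact: cv.
by apply: nearW => N; exact: hA.
Qed.
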